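(* Let $p$ be prime and $H\le\mathrm{S}_n$ be in $\mathfrak{InP}(\mathrm{C}_p)$ with $|H|=p^s$, and let $B,K,\gamma,D$ be as in the context. Let $F=\mathrm{GL}_s(p)\times D$ act on the set $\mathrm{M}(s,k,p)$ of $s\times k$ matrices over $\mathbb{F}_p$ by $M^{(R,d)}=R^{-1}Md$. Let $\kappa\in K$ and let $M,M'\in\mathrm{M}(s,k,p)$ be generator matrices of $\gamma(H)$ and $\gamma(H^{\kappa^{-1}})$ respectively. Then there exists $b\in B$ with $b\kappa\in N_{\mathrm{S}_n}(H)$ if and only if there exists $f\in F$ with $M^f=M'$.
   Context: $H\le\mathrm{S}_{n}$, $n=pk$, has orbits $\Omega_1,\dots,\Omega_k$ of size $p$ with each $G_i:=H|_{\Omega_i}$ cyclic of order $p$ (regarded as a subgroup of $\mathrm{S}_n$); $G=G_1\times\dots\times G_k$; $x^g=g^{-1}xg$, so $H^{\kappa^{-1}}=\kappa H\kappa^{-1}$. For a bijection $\varphi:\Omega_1\to\Omega_j$ ($j\neq1$), $\overline\varphi$ is the involution in $\mathrm{Sym}(\Omega_1\cup\Omega_j)$ with $\alpha^{\overline\varphi}=\varphi(\alpha)$ for $\alpha\in\Omega_1$. For $2\le j\le k$, $\phi_j:\Omega_1\to\Omega_j$ witnesses a permutation isomorphism from $G_1$ to $G_j$. $B=\langle N_{\mathrm{Sym}(\Omega_i)}(G_i):1\le i\le k\rangle$, $K=\langle\overline{\phi_j}:2\le j\le k\rangle$. $g_1$ generates $G_1$, $g_j=g_1^{\overline{\phi_j}}$,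 and $\gamma:G\to\mathbb{F}_p^k$ is $\gamma(g_1^{r_1}\cdots g_k^{r_k})=(r_1,\dots,r_k)$. $D$ is the group of diagonal matrices in $\mathrm{GL}_k(p)$. A generator matrix of a code is a matrix whose rows form a basis of it. *)

(* Defs.v *)
From mathcomp Require Import all_boot all_order all_algebra all_fingroup all_solvable.
Set Implicit Arguments. Unset Strict Implicit. Unset Printing Implicit Defensive.
Import GRing.Theory.
Local Open Scope ring_scope.

(* G_i := H|_{Omega_i}, regarded as a subgroup of S_n (identity off Omega_i). *)
Definition restrG n (Om : {set 'I_n}) (H : {group {perm 'I_n}}) : {group {perm 'I_n}} :=
  (restr_perm Om @* H)%G.

Definition is_bar n (A B : {set 'I_n}) (phi : 'I_n -> 'I_n) (t : {perm 'I_n}) : Prop :=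
  (forall a, a \in A -> t a = phi a /\ t (phi a) = a) /\
  (forall x, x \notin A :|: B -> t x = x).

Definition gen_i n k (i1 : 'I_k) (g1 : {perm 'I_n}) (t : 'I_k -> {perm 'I_n}) (i : 'I_k)
  : {perm 'I_n} := if i == i1 then g1 else (g1 ^ t i)%g.

Definition expo n (g x : {perm 'I_n}) : nat :=
  find (fun r => x == (g ^+ r)%g) (iota 0 #[g]%g).

(* gamma(g_1^{r_1} ... g_k^{r_k}) = (r_1,...,r_k) *)
Definition gamma (p n k : nat) (Om : 'I_k -> {set 'I_n}) (gg : 'I_k -> {perm 'I_n})
  (x : {perm 'I_n}) : 'rV['F_p]_k :=
  \row_i ((expo (gg i) (restr_perm (Om i) x))%:R : 'F_p)%R.

Definition generator_matrix p s k (M : 'M['F_p]_(s, k)) (S : {set 'rV['F_p]_k}) : Prop :=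
  row_free M /\ forall v : 'rV['F_p]_k, (v <= M)%MS <-> v \in S.

Definition F_related p s k (M M' : 'M['F_p]_(s, k)) : Prop :=
  exists R : 'M['F_p]_s, exists d : 'M['F_p]_k,
    [/\ R \in unitmx, is_diag_mx d, d \in unitmx & invmx R *m M *m d = M'].

(* Main.v *)
Require Import Defs.
From mathcomp Require Import all_boot all_order all_algebra all_fingroup all_solvable.
Set Implicit Arguments. Unset Strict Implicit. Unset Printing Implicit Defensive.
Import GRing.Theory.

Section Gen.
Local Open Scope group_scope.
Variable T : finType.
Implicit Types (c x g : {perm T}) (A C S O : {set T}).

Lemma conj_disj A C (z : {perm T}) c : perm_on A z -> perm_on C c -> [disjoint A & C] -> (z ^ c)%g = z.
Proof.
move=> zA cC dAC; apply/permP=> y; rewrite conjgE !permM.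
have cV := perm_onV cC.
case: (boolP (y \in C)) => yC.
  have yA : y \notin A by rewrite (disjointFl dAC).
  have cyC : c^-1%g y \in C by rewrite (perm_closed _ cV).
  have cyA : c^-1%g y \notin A by rewrite (disjointFl dAC).
  by rewrite (out_perm zA cyA) permKV (out_perm zA yA).
rewrite (out_perm cV yC).
have : z y \notin C.
  case: (boolP (y \in A)) => yA; last by rewrite (out_perm zA yA).
  by rewrite (disjointFr dAC) // (perm_closed _ zA).
by move/(out_perm cC).
Qed.

Lemma astabs_into S x : (forall y, y \in S -> x y \in S) -> x \in 'N(S | 'P).
Proof.
move=> xS; apply/astabsP => y /=; rewrite /aperm.
apply/idP/idP; last exact: xS.
move=> xyS.
have eqS : x @: S = S.
  apply/eqP; rewrite eqEcard card_imset ?leqnn ?andbT; last exact: perm_inj.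
  by apply/subsetP=> _ /imsetP [w wS ->]; exact: xS.
rewrite -eqS in xyS; case/imsetP: xyS => w wS /perm_inj ->; exact: wS.
Qed.

Lemma perm_onX O g m : perm_on O g -> perm_on O (g ^+ m).
Proof.
move=> gO; have: g \in perm.Sym O by rewrite inE.
by move/(groupX m); rewrite inE.
Qed.

Lemma powmap O g y0 (p a u : nat) : 0 < p -> #[g] = p -> perm_on O g -> y0 \in O ->
  (forall z, z \in O -> exists m, z = (g ^+ m) y0) -> #|O| = p -> a * u = 1 %[mod p] ->
  exists b, perm_on O b /\ g ^ b = g ^+ a.
Proof.
move=> p0 og gO y0O surj cO au.
pose f (r : 'I_p) := (g ^+ r) y0.
have fO m : (g ^+ m) y0 \in O by rewrite (perm_closed _ (perm_onX m gO)).
have imf : f @: setT = O.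
  apply/eqP; rewrite eqEsubset; apply/andP; split.
    by apply/subsetP=> _ /imsetP [r _ ->]; exact: fO.
  apply/subsetP=> z /surj [m ->].
  have mlt : m %% p < p by rewrite ltn_pmod.
  apply/imsetP; exists (Ordinal mlt) => //.
  by rewrite /f /= -og expg_mod_order.
have finj : {in setT &, injective f}.
  by apply/imset_injP; rewrite imf cO cardsT card_ord.
have R3 m m' : (g ^+ m) y0 = (g ^+ m') y0 -> g ^+ m = g ^+ m'.
  rewrite -(expg_mod_order g m) -(expg_mod_order g m') og => E.
  have mlt : m %% p < p by rewrite ltn_pmod.
  have mlt' : m' %% p < p by rewrite ltn_pmod.
  have := finj (Ordinal mlt) (Ordinal mlt') (in_setT _) (in_setT _) E.
  by case=> ->.
pose e z := oapp (@nat_of_ord p) 0 [pick r | f r == z].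
have eP z : z \in O -> (g ^+ e z) y0 = z.
  rewrite -imf => /imsetP [r _ ->]; rewrite /e.
  case: pickP => [r' /eqP //|/(_ r)]; by rewrite eqxx.
pose bf (c : nat) z := if z \in O then (g ^+ (c * e z)) y0 else z.
have key (c : nat) m : bf c ((g ^+ m) y0) = (g ^+ (c * m)) y0.
  rewrite /bf fO; suff -> : g ^+ (c * e ((g ^+ m) y0)) = g ^+ (c * m) by [].
  have /eqP := R3 (e ((g ^+ m) y0)) m (eP _ (fO m)); rewrite eq_expg_mod_order => /eqP E.
  by apply/eqP; rewrite eq_expg_mod_order -modnMmr E modnMmr.
have bK : cancel (bf a) (bf u).
  move=> z; case: (boolP (z \in O)) => zO; last by rewrite /bf (negPf zO) (negPf zO).
  have -> : bf a z = (g ^+ (a * e z)) y0 by rewrite /bf zO.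
    rewrite key -{2}(eP z zO); suff -> : g ^+ (u * (a * e z)) = g ^+ (e z) by [].
  apply/eqP; rewrite eq_expg_mod_order og.
  by rewrite mulnA [(u * a)%N]mulnC -modnMml au modnMml mul1n.
pose b := perm (can_inj bK).
have bO : perm_on O b.
  apply/subsetP=> z; rewrite inE permE /bf; case: ifP => // _; by rewrite eqxx.
have comm z : b (g z) = (g ^+ a) (b z).
  case: (boolP (z \in O)) => zO; last first.
    by rewrite (out_perm gO zO) (out_perm bO zO) (out_perm (perm_onX a gO) zO).
  rewrite !permE -(eP z zO) -permM -expgSr !key -permM -expgD.
  by rewrite mulnS addnC.
exists b; split => //; apply/permP=> y.
by rewrite conjgE !permM comm permKV.
Qed.

Lemma conj_prod (I : eqType) (r : seq I) (O : I -> {set T}) (bf : I -> {perm T})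
  g (j : I) (a : nat) : uniq r -> perm_on (O j) g -> (forall i, perm_on (O i) (bf i)) ->
  (forall i, i != j -> [disjoint O j & O i]) -> g ^ bf j = g ^+ a ->
  g ^ (\prod_(i <- r) bf i) = if j \in r then g ^+ a else g.
Proof.
move=> + gO bO dis ha; elim: r => [|i r IH] /=; first by rewrite big_nil conjg1.
case/andP=> ir ur; rewrite big_cons conjgM inE.
case: (eqVneq j i) ir => [<- ir|ji _] /=.
  by rewrite ha conjXg IH // (negbTE ir).
have dij : i != j by rewrite eq_sym.
by rewrite (conj_disj gO (bO i) (dis i dij)) IH.
Qed.

End Gen.

Section Gen2.
Local Open Scope group_scope.
Variable n : nat.
Implicit Types (g y : {perm 'I_n}).

Lemma expo_pow g m : expo g (g ^+ m) = m %% #[g].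
Proof.
rewrite /expo (@eq_in_find _ _ (pred1 (m %% #[g]))); last first.
  move=> r; rewrite mem_iota add0n /= => rlt.
  by rewrite eq_expg_mod_order (modn_small rlt) eq_sym.
rewrite (_ : find _ _ = index (m %% #[g]) (iota 0 #[g])) //.
have clt : m %% #[g] < #[g] by rewrite ltn_pmod ?order_gt0.
rewrite -{1}(add0n (m %% #[g])) -(nth_iota 0 0 clt).
by rewrite index_uniq ?size_iota ?iota_uniq.
Qed.

Lemma expoP g y : y \in <[g]> -> g ^+ expo g y = y.
Proof.
case/cycleP=> m ->; rewrite expo_pow; exact: expg_mod_order.
Qed.

End Gen2.

Section Main.
Local Open Scope group_scope.

Lemma main_aux (p k n s : nat) (Hp : prime p) (Hn : n = (p * k)%N)
  (H : {group {perm 'I_n}}) (Om : 'I_k -> {set 'I_n})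
  (Hcover : forall x : 'I_n, exists i, x \in Om i)
  (Hdisj : forall i j, i != j -> [disjoint Om i & Om j])
  (Horb : forall i x, x \in Om i -> orbit 'P%act H x = Om i)
  (Hsize : forall i, #|Om i| = p)
  (Hcyc : forall i, cyclic (restrG (Om i) H))
  (Hord : forall i, #|restrG (Om i) H| = p)
  (HH : #|H| = (p ^ s)%N)
  (i1 : 'I_k) (Hi1 : nat_of_ord i1 = 0%N)
  (phi : 'I_k -> 'I_n -> 'I_n) (t : 'I_k -> {perm 'I_n})
  (Hphi : forall j, j != i1 ->
     {in Om i1 &, injective (phi j)} /\ phi j @: Om i1 = Om j)
  (Hbar : forall j, j != i1 -> is_bar (Om i1) (Om j) (phi j) (t j))
  (Hiso : forall j, j != i1 -> (restrG (Om i1) H :^ t j)%g = restrG (Om j) H)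
  (g1 : {perm 'I_n}) (Hg1 : generator (restrG (Om i1) H) g1)
  (kappa : {perm 'I_n})
  (Hkappa : kappa \in <<[set t j | j in [set j | j != i1]]>>%g)
  (M M' : 'M['F_p]_(s, k))
  (HM : generator_matrix M (gamma p Om (gen_i i1 g1 t) @: H))
  (HM' : generator_matrix M' (gamma p Om (gen_i i1 g1 t) @: (H :^ kappa^-1)%g)) :
  (exists2 b, b \in <<\bigcup_(i < k) 'N_(perm.Sym (Om i))(restrG (Om i) H)>>%g
              & (b * kappa)%g \in 'N(H)%g)
  <-> F_related M M'.
Proof.
have p_gt1 := prime_gt1 Hp; have p_gt0 := prime_gt0 Hp.
pose gg := gen_i i1 g1 t.
pose gam := gamma p Om gg.
have {}HM : generator_matrix M (gam @: H) := HM.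
have {}HM' : generator_matrix M' (gam @: (H :^ kappa^-1)) := HM'.
have Ggen i : restrG (Om i) H = <[gg i]> :> {set _}.
  rewrite /gg /gen_i; case: eqP => [->|/eqP ji]; first exact: (eqP Hg1).
  by rewrite cycleJ -(eqP Hg1) Hiso.
have gord i : #[gg i] = p by rewrite orderE -Ggen Hord.
have GperM i y : y \in restrG (Om i) H -> perm_on (Om i) y.
  by case/morphimP => h _ _ ->; exact: restr_perm_on.
have ggon i m : perm_on (Om i) (gg i ^+ m).
  by apply: GperM; rewrite Ggen; exact: groupX (cycle_id _).
have ggon0 i : perm_on (Om i) (gg i) by have := ggon i 1%N; rewrite expg1.
have disj i j y : i != j -> y \in Om i -> y \notin Om j.
  by move=> ij yi; rewrite (disjointFr (Hdisj _ _ ij) yi).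
have Hdom i h : h \in H -> h \in 'N(Om i | 'P).
  move=> hH; apply: astabs_into => y yi.
  by rewrite -(Horb i y yi); exact: (mem_orbit 'P y hH).
have Hloc i h : h \in H -> exists m, forall y, y \in Om i -> h y = (gg i ^+ m) y.
  move=> hH; have : restr_perm (Om i) h \in <[gg i]>.
    by rewrite -Ggen; apply: mem_morphim => //; exact: Hdom.
  by case/cycleP => m Em; exists m => y yi; rewrite -Em restr_permE // Hdom.
pose Gset := [set x : {perm 'I_n} | [forall i, [exists m : 'I_p,
                [forall y in Om i, x y == (gg i ^+ m) y]]]].
have GsetP (x : {perm 'I_n}) : reflect (forall i, exists m, forall y, y \in Om i -> x y = (gg i ^+ m) y)
                       (x \in Gset).
  rewrite inE; apply: (iffP forallP) => [Hx i | Hx i].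
    have /existsP [m /forallP Hm] := Hx i; exists m => y yi.
    by apply/eqP; have := Hm y; rewrite yi.
  have [m Hm] := Hx i; apply/existsP; have mlt : (m %% p < p)%N by rewrite ltn_pmod.
  exists (Ordinal mlt); apply/forallP => y; apply/implyP => yi /=.
  by rewrite -{1}(gord i) expg_mod_order Hm.
have gamE (x : {perm 'I_n}) i m : (forall y, y \in Om i -> x y = (gg i ^+ m) y) -> gam x ord0 i = (m%:R)%R.
  move=> Hx; rewrite /gam /gamma mxE.
  have xN : x \in 'N(Om i | 'P).
    by apply: astabs_into => y yi; rewrite Hx // (perm_closed _ (ggon i m)).
  have -> : restr_perm (Om i) x = gg i ^+ m.
    apply/permP => y; case: (boolP (y \in Om i)) => yi; first by rewrite restr_permE // Hx.
    by rewrite (out_perm (restr_perm_on _ _) yi) (out_perm (ggon i m) yi).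
  by rewrite expo_pow gord Fp_nat_mod.
have gam_inj (x z : {perm 'I_n}) : x \in Gset -> z \in Gset -> gam x = gam z -> x = z.
  move=> /GsetP Hx /GsetP Hz E; apply/permP => y.
  have [i yi] := Hcover y.
  have [m Hm] := Hx i; have [m' Hm'] := Hz i.
  have : gam x ord0 i = gam z ord0 i by rewrite E.
  rewrite (gamE _ _ _ Hm) (gamE _ _ _ Hm') => /(congr1 val); rewrite /= !val_Fp_nat // => Em.
  by rewrite Hm // Hm' // -(expg_mod_order (gg i) m) -(expg_mod_order (gg i) m') gord Em.
have HG : H \subset Gset.
  by apply/subsetP => h hH; apply/GsetP => i; exact: Hloc.
have conjG (c : {perm 'I_n}) (a : 'I_k -> nat) (x : {perm 'I_n}) : (forall i, c \in 'N(Om i | 'P)) ->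
    (forall i, gg i ^ c = gg i ^+ a i) -> x \in Gset ->
    x ^ c \in Gset /\ gam (x ^ c) = (gam x *m diag_mx (\row_i ((a i)%:R : 'F_p)))%R.
  move=> cN ca /GsetP Hx.
  have Hxc i m : (forall y, y \in Om i -> x y = (gg i ^+ m) y) ->
      forall y, y \in Om i -> (x ^ c) y = (gg i ^+ (a i * m)) y.
    move=> Hm y yi.
    have cNi : c^-1 \in 'N(Om i | 'P) by rewrite groupV cN.
    move/astabsP: cNi => cNi.
    have cy : c^-1 y \in Om i by have := cNi y; rewrite /aperm yi.
    rewrite conjgE !permM Hm // expgM -ca -conjXg conjgE !permM //.
  split.
    apply/GsetP => i; have [m Hm] := Hx i; exists (a i * m)%N; exact: Hxc.
  apply/rowP => i; have [m Hm] := Hx i.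
  have e1 := gamE _ _ _ (Hxc _ _ Hm); have e2 := gamE _ _ _ Hm.
  move: e1 e2; rewrite mul_mx_diag /gam /gamma !mxE => -> ->.
  by rewrite natrM mulrC.
have tfacts j : j != i1 -> [/\ forall y, t j (t j y) = y,
    forall y, y \in Om i1 -> t j y \in Om j,
    forall y, y \in Om j -> t j y \in Om i1 &
    forall i y, i != i1 -> i != j -> y \in Om i -> t j y = y].
  move=> ji; have [tphi tfix] := Hbar j ji; have [_ phim] := Hphi j ji.
  have Hj y : y \in Om j -> exists2 a, a \in Om i1 & y = phi j a.
    by rewrite -phim => /imsetP [a aO ->]; exists a.
  split.
  - move=> y; case: (boolP (y \in Om i1)) => y1.
      by rewrite (tphi y y1).1 (tphi y y1).2.
    case: (boolP (y \in Om j)) => yj.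
      by have [a aO ->] := Hj y yj; rewrite (tphi a aO).2 (tphi a aO).1.
    have yn : y \notin Om i1 :|: Om j by rewrite inE negb_or y1 yj.
    by rewrite (tfix y yn) (tfix y yn).
  - by move=> y y1; rewrite (tphi y y1).1 -phim; exact: imset_f.
  - by move=> y yj; have [a aO ->] := Hj y yj; rewrite (tphi a aO).2.
  - move=> i y i1' ij yi; apply: tfix.
    by rewrite inE negb_or (disj _ _ _ i1' yi) (disj _ _ _ ij yi).
have tN j : j != i1 -> t j \in 'N(Gset).
  move=> ji; have [tt t1 tj to] := tfacts j ji.
  have tV y : (t j)^-1 y = t j y by rewrite -{1}(tt y) permK.
  have ggj : gg j = g1 ^ t j by rewrite /gg /gen_i (negPf ji).
  have gg1 : gg i1 = g1 by rewrite /gg /gen_i eqxx.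
  rewrite inE; apply/subsetP => _ /imsetP [x /GsetP Hx ->]; apply/GsetP => i.
  case: (eqVneq i i1) => [->|ii1].
    have [m Hm] := Hx j; exists m => y y1.
    rewrite /= conjgE !permM tV Hm ?t1 // ggj -conjXg conjgE !permM tV tt tt gg1 //.
  case: (eqVneq i j) => [->|iij].
    have [m Hm] := Hx i1; exists m => y yj.
    by rewrite /= conjgE !permM tV Hm ?tj // gg1 ggj -conjXg conjgE !permM tV.
  have [m Hm] := Hx i; exists m => y yi.
  rewrite /= conjgE !permM tV (to i y ii1 iij yi) Hm //.
  by rewrite (to i _ ii1 iij) // (perm_closed _ (ggon i m)).
have kN : kappa^-1 \in 'N(Gset).
  rewrite groupV; apply: (subsetP _ _ Hkappa); rewrite gen_subG.
  apply/subsetP => x /imsetP [j ji ->]; rewrite inE in ji; exact: tN.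
have HkG : H :^ kappa^-1 \subset Gset.
  apply/subsetP => _ /imsetP [h hH ->]; move: kN; rewrite inE => /subsetP; apply.
  by rewrite memJ_conjg (subsetP HG).
have BN i : <<\bigcup_(j < k) 'N_(perm.Sym (Om j))(restrG (Om j) H)>>
              \subset 'N(Om i | 'P) :&: 'N(restrG (Om i) H).
  rewrite gen_subG; apply/bigcupsP => j _; apply/subsetP => c.
  rewrite in_setI => /andP [cS cN]; rewrite inE in cS.
  rewrite in_setI; apply/andP; split.
    apply: astabs_into => y yi; case: (eqVneq i j) => [ij|ij].
      by rewrite ij (perm_closed _ cS) -ij.
    by rewrite (out_perm cS) // (disj _ _ _ ij yi).
  case: (eqVneq i j) => [->|ij] //.
  rewrite inE; apply/subsetP => _ /imsetP [y yG ->].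
  by rewrite /= (conj_disj (GperM _ _ yG) cS) //; exact: Hdisj.
have Bprops b : b \in <<\bigcup_(j < k) 'N_(perm.Sym (Om j))(restrG (Om j) H)>> ->
    (forall i, b \in 'N(Om i | 'P)) /\ (forall i, b \in 'N(restrG (Om i) H)).
  by move=> bB; split => i; have := subsetP (BN i) b bB; rewrite in_setI => /andP [].
split.
  case=> b bB bkN.
  have [bO bN] := Bprops b bB.
  have HbK : H :^ b = H :^ kappa^-1.
    have := normP bkN; rewrite conjsgM => E.
    by rewrite -{2}E conjsgK.
  pose a i := expo (gg i) (gg i ^ b).
  have ha i : gg i ^ b = gg i ^+ a i.
    rewrite /a expoP //.
    by rewrite -Ggen -(normP (bN i)) memJ_conjg Ggen cycle_id.
  pose D := diag_mx (\row_i ((a i)%:R : 'F_p))%R.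
  have Dunit : D \in unitmx.
    rewrite unitmxE det_diag unitfE prodf_seq_neq0; apply/allP => i _ /=; rewrite mxE.
    apply/negP => /eqP a0.
    have : (p %| a i)%N by rewrite (dvdn_pcharf (pchar_Fp Hp)) a0.
    rewrite -(gord i) order_dvdn -ha conjg_eq1 => /eqP g1e.
    by have := gord i; rewrite g1e order1 => p1; rewrite -p1 in p_gt1.
  have Dconj x : x \in Gset -> x ^ b \in Gset /\ gam (x ^ b) = (gam x *m D)%R.
    exact: conjG b a x bO ha.
  have sub1 : (M' <= (M *m D)%R)%MS.
    apply/row_subP => r; have := row_sub r M'; move/(proj2 HM' _) => /imsetP [x xK ->].
    rewrite -HbK in xK; case/imsetP: xK => h hH ->.
    rewrite (Dconj h (subsetP HG h hH)).2; apply: submxMr.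
    by apply/(proj2 HM _); exact: imset_f.
  have sub2 : ((M *m D)%R <= M')%MS.
    apply/row_subP => r; rewrite row_mul.
    have := row_sub r M; move/(proj2 HM _) => /imsetP [h hH ->].
    have <- := (Dconj h (subsetP HG h hH)).2.
    by apply/(proj2 HM' _); rewrite -HbK; apply: imset_f; rewrite memJ_conjg.
  have [X EX] := submxP sub1; have [Y EY] := submxP sub2.
  have XY : (X *m Y = 1%:M)%R.
    apply: (row_free_inj (proj1 HM')); rewrite /= mul1mx -mulmxA -EY -EX //.
  have [Xu _] := mulmx1_unit XY.
  exists (invmx X), D; split => //; first by rewrite unitmx_inv.
    exact: diag_mx_is_diag.
  by rewrite invmxK -mulmxA -EX.
case=> R [d [Ru dd du Ed]].
pose a i := nat_of_ord (d i i).
have dE : d = diag_mx (\row_i ((a i)%:R : 'F_p))%R.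
  apply/matrixP => i j; rewrite !mxE /a natr_Zp.
  case: (eqVneq i j) => [->|ij]; first by rewrite mulr1n.
  by rewrite mulr0n; move/is_diag_mxP: dd; apply.
have anz i : (((a i)%:R : 'F_p) != 0)%R.
  move: du; rewrite unitmxE dE det_diag unitfE prodf_seq_neq0 => /allP /(_ i).
  by rewrite mem_index_enum /= mxE => /(_ isT).
pose u i := nat_of_ord (((a i)%:R : 'F_p)^-1)%R.
have au i : (a i * u i = 1 %[mod p])%N.
  have E : (((a i * u i)%N%:R : 'F_p) = (1%N)%:R)%R.
    by rewrite natrM /u natr_Zp mulfV.
  have := congr1 val E; rewrite /= !val_Fp_nat // Fp_cast // => ->.
have exb i : exists bi : {perm 'I_n}, perm_on (Om i) bi /\ gg i ^ bi = gg i ^+ a i.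
  have : (0 < #|Om i|)%N by rewrite Hsize.
  case/card_gt0P => y0 y0O.
  apply: (powmap (u := u i) p_gt0 (gord i) (ggon0 i) y0O _ (Hsize i) (au i)).
  move=> z zi; rewrite -(Horb i y0 y0O) in zi; case/imsetP: zi => h hH ->.
  have [m Hm] := Hloc i h hH; exists m; exact: Hm y0 y0O.
pose bf i := odflt 1 [pick bi | perm_on (Om i) bi && (gg i ^ bi == gg i ^+ a i)].
have bfP i : perm_on (Om i) (bf i) /\ gg i ^ bf i = gg i ^+ a i.
  rewrite /bf; case: pickP => [bi /andP [? /eqP ?] //| none].
  have [bi [h1 h2]] := exb i.
  by have := none bi; rewrite h1 h2 eqxx.
pose b := \prod_(i < k) bf i.
have bB : b \in <<\bigcup_(j < k) 'N_(perm.Sym (Om j))(restrG (Om j) H)>>.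
  rewrite /b; apply: group_prod => i _; apply: mem_gen; apply/bigcupP; exists i => //.
  rewrite in_setI; apply/andP; split; first by rewrite inE (bfP i).1.
  by rewrite inE Ggen -cycleJ (bfP i).2 cycle_subG groupX ?cycle_id.
have hab j : gg j ^ b = gg j ^+ a j.
  have dis i : i != j -> [disjoint Om j & Om i].
    by move=> ij; apply: Hdisj; rewrite eq_sym.
  have := conj_prod (index_enum_uniq _) (ggon0 j) (fun i => (bfP i).1) dis (bfP j).2.
  by rewrite mem_index_enum.
have [bO _] := Bprops b bB.
have Dconj x : x \in Gset -> x ^ b \in Gset /\ gam (x ^ b) = (gam x *m d)%R.
  by rewrite dE; exact: conjG b a x bO hab.
have MdR : (M *m d = R *m M')%R by rewrite -Ed !mulmxA mulmxV // mul1mx.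
have HbK : H :^ b = H :^ kappa^-1.
  apply/eqP; rewrite eqEcard !cardJg leqnn andbT; apply/subsetP => _ /imsetP [h hH ->].
  have hG := subsetP HG h hH; have [xbG gE] := Dconj h hG.
  have : gam (h ^ b) \in gam @: (H :^ kappa^-1).
    apply: (proj1 (proj2 HM' _)); rewrite gE.
    have /submxP [w ->] : (gam h <= M)%MS by apply: (proj2 (proj2 HM _)); exact: imset_f.
    by rewrite -mulmxA MdR mulmxA submxMl.
  case/imsetP => z zK E.
  by rewrite /= (gam_inj _ _ xbG (subsetP HkG z zK) E).
exists b => //; apply/normP.
by rewrite conjsgM HbK conjsgKV.
Qed.

End Main.

Theorem lemma4p3 (p k n s : nat) (Hp : prime p) (Hn : n = (p * k)%N)
  (H : {group {perm 'I_n}}) (Om : 'I_k -> {set 'I_n})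
  (Hcover : forall x : 'I_n, exists i, x \in Om i)
  (Hdisj : forall i j, i != j -> [disjoint Om i & Om j])
  (Horb : forall i x, x \in Om i -> orbit 'P%act H x = Om i)
  (Hsize : forall i, #|Om i| = p)
  (Hcyc : forall i, cyclic (restrG (Om i) H))
  (Hord : forall i, #|restrG (Om i) H| = p)
  (HH : #|H| = (p ^ s)%N)
  (i1 : 'I_k) (Hi1 : nat_of_ord i1 = 0%N)
  (phi : 'I_k -> 'I_n -> 'I_n) (t : 'I_k -> {perm 'I_n})
  (Hphi : forall j, j != i1 ->
     {in Om i1 &, injective (phi j)} /\ phi j @: Om i1 = Om j)
  (Hbar : forall j, j != i1 -> is_bar (Om i1) (Om j) (phi j) (t j))
  (Hiso : forall j, j != i1 -> (restrG (Om i1) H :^ t j)%g = restrG (Om j) H)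
  (g1 : {perm 'I_n}) (Hg1 : generator (restrG (Om i1) H) g1)
  (kappa : {perm 'I_n})
  (Hkappa : kappa \in <<[set t j | j in [set j | j != i1]]>>%g)
  (M M' : 'M['F_p]_(s, k))
  (HM : generator_matrix M (gamma p Om (gen_i i1 g1 t) @: H))
  (HM' : generator_matrix M' (gamma p Om (gen_i i1 g1 t) @: (H :^ kappa^-1)%g)) :
  (exists2 b, b \in <<\bigcup_(i < k) 'N_(perm.Sym (Om i))(restrG (Om i) H)>>%g
              & (b * kappa)%g \in 'N(H)%g)
  <-> F_related M M'.
Proof. intros. exact (main_aux Hp Hn Hcover Hdisj Horb Hsize Hcyc Hord HH Hi1 Hphi Hbar Hiso Hg1 Hkappa HM HM'). Qed.
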